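(* Let $\mathrm{V}=\{1,\dots,n\}$ with $n=r_1r_2$ for integers $r_1,r_2\ge2$. Then there exist a graph $\mathrm{G}$ with node set $\mathrm{V}$, a clique coverage $\mathsf{H}^\ast$ of $\mathrm{G}$ consisting only of cliques of size $r_1$ or $r_2$, and a sequence $\mathrm{Q}_0,\dots,\mathrm{Q}_{r_1+r_2-1}$ of cliques from $\mathsf{H}^\ast$, such that the clique-gossip averaging algorithm along this sequence satisfies $\mathbf{x}(r_1+r_2)=\big(\frac1n\sum_{j=1}^n\mathbf{x}_j(0)\big)\mathbf{1}$ for every initial value $\mathbf{x}(0)\in\mathbb{R}^n$; in particular it converges globally in finite time, in $r_1+r_2$ steps.
   Context: A clique of a simple undirected graph $\mathrm{G}$ on $\mathrm{V}$ is a vertex subset inducing a complete subgraph; a clique coverage is a finite set of cliques whose union is $\mathrm{V}$ and whose union of induced subgraphs is connected. The clique-gossip averaging algorithm along a sequence of cliques $\mathrm{Q}_0,\mathrm{Q}_1,\dots$ acts on $\mathbf{x}(t)\in\mathbb{R}^n$ by $\mathbf{x}_i(t+1)=\frac{1}{|\mathrm{Q}_t|}\sum_{j\in\mathrm{Q}_t}\mathbf{x}_j(t)$ if $i\in\mathrm{Q}_t$ and $\mathbf{x}_i(t+1)=\mathbf{x}_i(t)$ otherwise. $\mathbf{1}$ denotes the all-ones vector. It converges globally in finite time if for every initial value $\mathbf{x}(0)$ there is $T\ge0$ with $\mathbf{x}(T)\in\mathrm{span}\{\mathbf{1}\}$. *)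

(* Defs.v *)
From HB Require Import structures.
From mathcomp Require Import all_boot all_order all_algebra.
Set Implicit Arguments. Unset Strict Implicit. Unset Printing Implicit Defensive.
Import Order.TTheory GRing.Theory Num.Theory.

Definition simple_graph (n : nat) (e : rel 'I_n) : Prop :=
  symmetric e /\ irreflexive e.

Definition is_clique (n : nat) (e : rel 'I_n) (Q : {set 'I_n}) : Prop :=
  forall i j, i \in Q -> j \in Q -> i != j -> e i j.

Definition cover_rel (n : nat) (H : {set {set 'I_n}}) : rel 'I_n :=
  fun i j => [exists Q in H, [&& i \in Q, j \in Q & i != j]].

Definition clique_coverage (n : nat) (e : rel 'I_n) (H : {set {set 'I_n}}) : Prop :=
  [/\ forall Q, Q \in H -> is_clique e Q,
      \bigcup_(Q in H) Q = [set: 'I_n]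
    & forall i j : 'I_n, connect (cover_rel H) i j].

Local Open Scope ring_scope.

Definition gossip_step (R : realFieldType) (n : nat) (Q : {set 'I_n})
    (x : 'I_n -> R) : 'I_n -> R :=
  fun i => if i \in Q then (\sum_(j in Q) x j) / (#|Q|%:R) else x i.

Fixpoint gossip_traj (R : realFieldType) (n : nat) (Qs : nat -> {set 'I_n})
    (x0 : 'I_n -> R) (t : nat) : 'I_n -> R :=
  match t with
  | O => x0
  | S t' => gossip_step (Qs t') (gossip_traj Qs x0 t')
  end.

(* Main.v *)
Require Import Defs.
From HB Require Import structures.
From mathcomp Require Import all_boot all_order all_algebra zify.
Import Order.TTheory GRing.Theory Num.Theory.
Set Implicit Arguments. Unset Strict Implicit.
Local Open Scope ring_scope.

Lemma idx_lt (r1 r2 : nat) (a : 'I_r1) (b : 'I_r2) : (a * r2 + b < r1 * r2)%N.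
Proof. have := ltn_ord a; have := ltn_ord b; nia. Qed.
Definition idx r1 r2 (a : 'I_r1) (b : 'I_r2) : 'I_(r1 * r2) := Ordinal (idx_lt a b).
Lemma row_lt r1 r2 (k : 'I_(r1 * r2)) : (k %/ r2 < r1)%N.
Proof.
case: r2 k => [|r2] k; first by case: k => m; rewrite muln0.
by rewrite ltn_divLR.
Qed.
Lemma col_lt r1 r2 (k : 'I_(r1 * r2)) : (k %% r2 < r2)%N.
Proof.
case: r2 k => [|r2] k; first by case: k => m; rewrite muln0.
by rewrite ltn_pmod.
Qed.
Definition rowo r1 r2 (k : 'I_(r1 * r2)) : 'I_r1 := Ordinal (row_lt k).
Definition colo r1 r2 (k : 'I_(r1 * r2)) : 'I_r2 := Ordinal (col_lt k).

Lemma idx_div r1 r2 (a : 'I_r1) (b : 'I_r2) : ((idx a b) %/ r2 = a)%N.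
Proof.
rewrite /= divnMDl; last by case: r2 b => [[]|].
by rewrite divn_small ?addn0.
Qed.
Lemma idx_mod r1 r2 (a : 'I_r1) (b : 'I_r2) : ((idx a b) %% r2 = b)%N.
Proof. by rewrite /= modnMDl modn_small. Qed.

Lemma sum_idx (T : Type) (z : T) (op : Monoid.com_law z) r1 r2
  (F : 'I_(r1 * r2) -> T) :
  \big[op/z]_(k < r1 * r2) F k = \big[op/z]_(a < r1) \big[op/z]_(b < r2) F (idx a b).
Proof.
rewrite pair_big.
rewrite (reindex (fun p : 'I_r1 * 'I_r2 => idx p.1 p.2)) //.
exists (fun k => (rowo k, colo k)) => [[a b] _|k _].
  by congr pair; apply: val_inj; rewrite /= ?idx_div ?idx_mod.
by apply: val_inj; rewrite /= -divn_eq.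
Qed.

Lemma rowsum (T : Type) (z : T) (op : Monoid.com_law z) r1 r2 (a : 'I_r1)
  (F : 'I_(r1 * r2) -> T) :
  \big[op/z]_(j : 'I_(r1 * r2) | (j %/ r2 == a)%N) F j = \big[op/z]_(b < r2) F (idx a b).
Proof.
rewrite big_mkcond sum_idx (bigD1 a) //= [X in op _ X]big1 ?Monoid.mulm1.
  by apply: eq_bigr => b _; rewrite idx_div eqxx.
move=> a' na; apply: big1 => b _; rewrite idx_div.
by case: eqP => // h; case/eqP: na; apply: val_inj.
Qed.

Lemma colsum (T : Type) (z : T) (op : Monoid.com_law z) r1 r2 (b : 'I_r2)
  (f : nat -> T) :
  \big[op/z]_(j : 'I_(r1 * r2) | (j %% r2 == b)%N) f (j %/ r2)%N = \big[op/z]_(a < r1) f a.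
Proof.
rewrite big_mkcond sum_idx; apply: eq_bigr => a _.
rewrite (bigD1 b) //= idx_mod idx_div eqxx [X in op _ X]big1 ?Monoid.mulm1 // => b' nb.
rewrite idx_mod; case: eqP => // h; case/eqP: nb; exact: val_inj.
Qed.

Lemma card_row r1 r2 (a : nat) : (a < r1)%N ->
  #|[set k : 'I_(r1 * r2) | (k %/ r2 == a)%N]| = r2.
Proof.
move=> ha; rewrite -sum1_card.
rewrite (eq_bigl (fun k : 'I_(r1 * r2) => (k %/ r2 == Ordinal ha)%N)); last by move=> k; rewrite in_set.
by rewrite rowsum sum1_card card_ord.
Qed.

Lemma card_col r1 r2 (b : nat) : (b < r2)%N ->
  #|[set k : 'I_(r1 * r2) | (k %% r2 == b)%N]| = r1.
Proof.
move=> hb; rewrite -sum1_card.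
rewrite (eq_bigl (fun k : 'I_(r1 * r2) => (k %% r2 == Ordinal hb)%N)); last by move=> k; rewrite in_set.
by rewrite (@colsum _ _ addn r1 r2 (Ordinal hb) (fun _ => 1%N)) sum1_card card_ord.
Qed.

Definition QQ r1 r2 (t : nat) : {set 'I_(r1 * r2)} :=
  if (t < r1)%N then [set k : 'I_(r1 * r2) | (k %/ r2 == t)%N]
  else [set k : 'I_(r1 * r2) | (k %% r2 == t - r1)%N].

Definition ra (R : realFieldType) r1 r2 (x0 : 'I_(r1 * r2) -> R) (a : nat) : R :=
  (\sum_(j : 'I_(r1 * r2) | (j %/ r2 == a)%N) x0 j) / r2%:R.

Lemma phase1 (R : realFieldType) r1 r2 (x0 : 'I_(r1 * r2) -> R) t :
  (t <= r1)%N -> forall k,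
  gossip_traj (@QQ r1 r2) x0 t k = if (k %/ r2 < t)%N then ra x0 (k %/ r2)%N else x0 k.
Proof.
elim: t => [|t IH] ht k /=; first by [].
have ->: QQ r1 r2 t = [set k : 'I_(r1 * r2) | (k %/ r2 == t)%N] by rewrite /QQ ht.
rewrite /gossip_step in_set.
have ->: #|[set k : 'I_(r1 * r2) | (k %/ r2 == t)%N]| = r2 by apply: card_row.
case: eqP => [e|ne].
  rewrite e ltnSn /ra; congr (_ / _).
  apply: eq_big => j; first by rewrite in_set.
  by rewrite in_set => /eqP ej; rewrite (IH (ltnW ht)) ej ltnn.
rewrite (IH (ltnW ht)).
have ->: (k %/ r2 < t.+1)%N = (k %/ r2 < t)%N by lia.
by [].
Qed.

Lemma phase2 (R : realFieldType) r1 r2 (x0 : 'I_(r1 * r2) -> R) s :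
  (0 < r1)%N -> (0 < r2)%N ->
  (s <= r2)%N -> forall k,
  gossip_traj (@QQ r1 r2) x0 (r1 + s) k =
    if (k %% r2 < s)%N then (\sum_(j < r1 * r2) x0 j) / ((r1 * r2)%:R)
    else ra x0 (k %/ r2)%N.
Proof.
move=> h1 h2; elim: s => [|s IH] hs k.
  by rewrite addn0 phase1 // row_lt ltn0.
rewrite addnS /=.
have ->: QQ r1 r2 (r1 + s) = [set k : 'I_(r1 * r2) | (k %% r2 == s)%N].
  by rewrite /QQ ltnNge leq_addr /= addKn.
unfold gossip_step.
rewrite inE.
have ->: #|[set k : 'I_(r1 * r2) | (k %% r2 == s)%N]| = r1 by apply: card_col.
case: eqP => [e|ne]; last first.
  rewrite (IH (ltnW hs)).
  have ->: (k %% r2 < s.+1)%N = (k %% r2 < s)%N by lia.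
  by [].
rewrite e ltnSn.
rewrite [in LHS](eq_big (fun j : 'I_(r1 * r2) => (j %% r2 == Ordinal hs)%N)
           (fun j => ra x0 (j %/ r2)%N)); first last.
- by move=> j; rewrite in_set => /eqP ej; rewrite (IH (ltnW hs)) ej ltnn.
- by move=> j; rewrite in_set.
rewrite (@colsum _ _ +%R r1 r2 (Ordinal hs) (ra x0)).
rewrite /ra -mulr_suml.
rewrite (eq_bigr (fun a : 'I_r1 => \sum_(b < r2) x0 (idx a b))); last first.
  by move=> a _; rewrite (@rowsum _ _ +%R).
rewrite -sum_idx natrM invfM mulrA [in RHS]mulrAC.
by [].
Qed.

Theorem theorem2 (r1 r2 : nat) (hr1 : (2 <= r1)%N) (hr2 : (2 <= r2)%N) :
  exists (e : rel 'I_(r1 * r2)) (H : {set {set 'I_(r1 * r2)}})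
         (Qs : nat -> {set 'I_(r1 * r2)}),
    [/\ simple_graph e,
        clique_coverage e H,
        (forall Q, Q \in H -> #|Q| = r1 \/ #|Q| = r2),
        (forall t, (t < r1 + r2)%N -> Qs t \in H)
      & forall (R : realFieldType) (x0 : 'I_(r1 * r2) -> R) (i : 'I_(r1 * r2)),
          gossip_traj Qs x0 (r1 + r2) i
          = (\sum_(j < r1 * r2) x0 j) / ((r1 * r2)%:R)].
Proof.
pose e := fun i j : 'I_(r1 * r2) =>
  (i != j) && (((i %/ r2) == (j %/ r2))%N || ((i %% r2) == (j %% r2))%N).
pose H := [set QQ r1 r2 (val t) | t : 'I_(r1 + r2)].
have memH : forall t, (t < r1 + r2)%N -> QQ r1 r2 t \in H.
  by move=> t ht; apply/imsetP; exists (Ordinal ht).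
exists e, H, (QQ r1 r2); split => //.
- split; first by move=> i j; rewrite /e (eq_sym i) (eq_sym (i %/ r2)%N) (eq_sym (i %% r2)%N).
  by move=> i; rewrite /e eqxx.
- split.
  + move=> Q /imsetP [t _ ->] i j; rewrite /QQ; case: ifP => _;
      rewrite !in_set => /eqP hi /eqP hj nij; rewrite /e nij hi hj eqxx ?orbT //.
  + apply/setP => k; rewrite in_setT; apply/bigcupP; exists (QQ r1 r2 (k %/ r2)%N).
      by apply: memH; have := row_lt k; lia.
    by rewrite /QQ row_lt in_set.
  + move=> i j.
    pose m := idx (rowo i) (colo j).
    apply: (connect_trans (x:=i) (y:=m) (z:=j)).
      case: (eqVneq i m) => [->|nim]; first exact: connect0.
      apply: connect1; apply/existsP; exists (QQ r1 r2 (i %/ r2)%N).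
      rewrite memH; last by have := row_lt i; lia.
      by rewrite /QQ row_lt !in_set idx_div eqxx nim.
    case: (eqVneq m j) => [->|nmj]; first exact: connect0.
    apply: connect1; apply/existsP; exists (QQ r1 r2 (r1 + j %% r2)%N).
    rewrite memH; last by have := col_lt j; lia.
    by rewrite /QQ ltnNge leq_addr /= addKn !in_set idx_mod eqxx nmj.
- move=> Q /imsetP [[t ht] _ ->] /=; rewrite /QQ; case: ifP => h.
    by right; apply: card_row.
  by left; apply: card_col; move/negbT: h; lia.
- move=> R x0 i.
  by rewrite phase2 ?col_lt //; lia.
Qed.
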